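(* Let $F = \bigwedge_{i\in[c]} C_i$ be a 3-SAT formula over the $p$ variables $x_1,\dots,x_p$ with clauses $C_1,\dots,C_c$, and let $A$ be a partial assignment on these variables, where clauses and partial assignments are viewed as elements of $\mathcal{B}$. Then: 1. (Satisfiability checking) $A \models F$ if and only if $\min_{i\in[c]} E(C_i)\cdot E(A) \ge 1$. 2. (Conflict detection) $F \models \lnot A$ if and only if $\min_{i\in[c]} E(C_i)\cdot E_{\text{not-false}}(A) = 0$. 3. (Deduction) Let $D := \{\ell \in L \mid F\land A \models_1 \ell\}$. Then $$E(D) = \max\Big[\min\Big(\sum_{i\in[c]} E(C_i)\,\mathbf{1}_{\{E(C_i)\cdot E_{\text{not-false}}(A) = 1\}},\ 1\Big) - E_{\text{assigned}}(A),\ 0\Big],$$ where $\max$ and $\min$ are applied elementwise.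
   Context: Literals: $L = \{x_1,\lnot x_1,\dots,x_p,\lnot x_p\}$. $\mathcal{B}$ is the set of subsets of $L$ that do not contain both $x_v$ and $\lnot x_v$ for any $v$. A clause $C\in\mathcal{B}$ denotes the disjunction of its literals; a partial assignment $A\in\mathcal{B}$ sets $x_v$ true if $x_v\in A$, false if $\lnot x_v\in A$, and leaves $x_v$ unassigned otherwise. A 3-SAT formula is a conjunction of clauses each with at most 3 literals. Encodings $E, E_{\text{not-false}}, E_{\text{assigned}}: \mathcal{B}\to\mathbb{R}^{2p}$: for $v\in[p]$, $E(B)_v = \mathbf{1}_{x_v\in B}$, $E(B)_{v+p} = \mathbf{1}_{\lnot x_v\in B}$; $E_{\text{not-false}}(B)_v = \mathbf{1}_{\lnot x_v\notin B}$, $E_{\text{not-false}}(B)_{v+p} = \mathbf{1}_{x_v\notin B}$; $E_{\text{assigned}}(B)_v = E_{\text{assigned}}(B)_{v+p} = \mathbf{1}_{x_v\in B \text{ or } \lnot x_v\in B}$. $A\models F$ means every clause $C_i$ contains a literal belonging to $A$. A literal is forced false by $A$ if its negation belongs to $A$. $F\models\lnot A$ means some clause $C_i$ has all of its literals forced false by $A$. $F\land A\models_1 \ell$ (unit propagation) means there is a clause $C_i$ that is not satisfied by $A$ (contains no literal of $A$) and, after deleting from $C_i$ all literals forced false by $A$, the remaining clause is exactly $\{\ell\}$. For a set $D\subseteq L$, $E(D)$ is defined by the same formula as for $\mathcal{B}$. *)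

(* Defs.v *)
From HB Require Import structures.
From mathcomp Require Import all_boot all_order all_algebra.
From mathcomp Require Import constructive_ereal.
Set Implicit Arguments. Unset Strict Implicit. Unset Printing Implicit Defensive.
Import Order.TTheory GRing.Theory Num.Theory.

(* Literals over variables x_1..x_p: (v, true) = x_v, (v, false) = ~ x_v. *)
Definition lit (p : nat) := ('I_p * bool)%type.
Definition negl p (l : lit p) : lit p := (l.1, ~~ l.2).

Definition inB p (B : {set lit p}) : bool :=
  [forall v : 'I_p, ~~ (((v, true) \in B) && ((v, false) \in B))].

(* Coordinate j of R^{2p}: j = v (j < p) refers to x_v, j = v + p refers to ~ x_v. *)
Definition litidx p (j : 'I_(p + p)) : lit p :=
  match split j with inl v => (v, true) | inr v => (v, false) end.

Section Enc.
Variable R : numDomainType.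
Local Open Scope ring_scope.

Definition E p (B : {set lit p}) : 'rV[R]_(p + p) :=
  \row_j ((litidx j \in B) : nat)%:R.
Definition E_notfalse p (B : {set lit p}) : 'rV[R]_(p + p) :=
  \row_j ((negl (litidx j) \notin B) : nat)%:R.
Definition E_assigned p (B : {set lit p}) : 'rV[R]_(p + p) :=
  \row_j (((litidx j \in B) || (negl (litidx j) \in B)) : nat)%:R.

Definition dot n (u w : 'rV[R]_n) : R := \sum_(j < n) u 0 j * w 0 j.
End Enc.

Definition is3SAT p c (C : 'I_c -> {set lit p}) : Prop :=
  forall i, inB (C i) /\ #|C i| <= 3.

Definition sat p c (C : 'I_c -> {set lit p}) (A : {set lit p}) : Prop :=
  forall i, exists l, l \in C i /\ l \in A.

Definition forced_false p (A : {set lit p}) (l : lit p) : bool := negl l \in A.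

Definition entails_notA p c (C : 'I_c -> {set lit p}) (A : {set lit p}) : Prop :=
  exists i, forall l, l \in C i -> forced_false A l.

Definition unit_prop p c (C : 'I_c -> {set lit p}) (A : {set lit p}) (l : lit p) : bool :=
  [exists i, [forall l', (l' \in C i) ==> (l' \notin A)] &&
             ([set l' in C i | ~~ forced_false A l'] == [set l])].

Definition deduced p c (C : 'I_c -> {set lit p}) (A : {set lit p}) : {set lit p} :=
  [set l | unit_prop C A l].

(* Main.v *)
Require Import Defs.
From HB Require Import structures.
From mathcomp Require Import all_boot all_order all_algebra.
From mathcomp Require Import constructive_ereal.
Import Order.TTheory GRing.Theory Num.Theory.
Local Open Scope ring_scope.


Section H.
Variable R : realDomainType.


Definition idxl p (l : lit p) : 'I_(p + p) :=
  unsplit (if l.2 then inl l.1 else inr l.1).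

Lemma litidx_bij p : bijective (@litidx p).
Proof.
exists (@idxl p).
- move=> j; rewrite -[j in RHS]splitK /idxl /litidx; by case: (split j).
- by case=> v [] /=; rewrite /idxl /litidx unsplitK.
Qed.

Lemma sum_lit p (g : lit p -> R) : \sum_(j < p + p) g (litidx j) = \sum_l g l.
Proof.
rewrite (reindex (@litidx p)) //.
by case: (litidx_bij p) => h h1 h2; exists h => x _.
Qed.

Lemma sum_bool_card (T : finType) (b : pred T) :
  \sum_(x : T) ((b x : nat)%:R : R) = #|[set x | b x]|%:R.
Proof.
rewrite -natr_sum; congr (_%:R).
rewrite -sum1_card [RHS]big_mkcond /=; apply: eq_bigr => x _.
by rewrite inE; case: (b x).
Qed.

Lemma dot_EE p (X Y : {set lit p}) :
  dot (E R X) (E R Y) = #|[set l | (l \in X) && (l \in Y)]|%:R.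
Proof.
rewrite /dot -sum_bool_card -sum_lit; apply: eq_bigr => j _.
by rewrite !mxE -natrM mulnb.
Qed.

Lemma dot_ENF p (X Y : {set lit p}) :
  dot (E R X) (E_notfalse R Y) = #|[set l | (l \in X) && (negl l \notin Y)]|%:R.
Proof.
rewrite /dot -sum_bool_card -sum_lit; apply: eq_bigr => j _.
by rewrite !mxE -natrM mulnb.
Qed.

Lemma bigmin_ge c (F : 'I_c -> \bar R) x :
  (x <= \big[Order.min/+oo%E]_(i < c) F i)%O <-> forall i, (x <= F i)%O.
Proof.
elim: c F => [|c IH] F.
  by rewrite big_ord0; split => // _; [case | exact: leey].
rewrite big_ord_recr /= le_min; split.
  case/andP => /IH h1 h2 i.
  case: (unliftP ord_max i) => [j ->|->] //.
  have -> : lift ord_max j = widen_ord (leqnSn c) j.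
    by apply: val_inj; rewrite /= /bump leqNgt ltn_ord.
  exact: h1.
move=> h; apply/andP; split => //; apply/IH => i; exact: h.
Qed.

Lemma bigmin_ex c (F : 'I_c -> \bar R) :
  \big[Order.min/+oo%E]_(i < c) F i = +oo%E \/
  exists i, \big[Order.min/+oo%E]_(i < c) F i = F i.
Proof.
elim: c F => [|c IH] F; first by rewrite big_ord0; left.
rewrite big_ord_recr /=.
set m := \big[_/_]_(i < c) _.
rewrite minEle; case: ifP => h.
- case: (IH (fun i => F (widen_ord (leqnSn c) i))) => [hm|[i hm]]; first by left; exact: hm.
  by right; exists (widen_ord (leqnSn c) i); exact: hm.
- by right; exists ord_max.
Qed.

Lemma inB_neg p (A : {set lit p}) l : inB A -> l \in A -> negl l \notin A.
Proof.
move=> /forallP /(_ l.1); case: l => v [] /= h hl; apply/negP => hn.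
  by move: h; rewrite hl hn.
by move: h; rewrite hl hn.
Qed.


End H.

Lemma unit_propE p c (C : 'I_c -> {set lit p}) (A : {set lit p}) l :
  inB A ->
  unit_prop C A l =
  [exists i, (l \in C i) &&
     (#|[set l0 | (l0 \in C i) && (negl l0 \notin A)]| == 1)%N]
  && ~~ ((l \in A) || (negl l \in A)).
Proof.
move=> hA.
have eN i : [set l' in C i | ~~ forced_false A l'] =
            [set l0 | (l0 \in C i) && (negl l0 \notin A)].
  by apply/setP => x; rewrite !inE.
apply/idP/idP.
- case/existsP => i /andP [/forallP h1]; rewrite eN => /eqP h2.
  have lN : l \in [set l0 | (l0 \in C i) && (negl l0 \notin A)] by rewrite h2 set11.
  move: (lN); rewrite inE => /andP [li nl].
  rewrite negb_or nl andbT; apply/andP; split.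
    by apply/existsP; exists i; rewrite li h2 cards1.
  exact: (implyP (h1 l) li).
- case/andP => /existsP [i /andP [li /cards1P [x hx]]].
  rewrite negb_or => /andP [lA nlA].
  have lN : l \in [set l0 | (l0 \in C i) && (negl l0 \notin A)] by rewrite inE li nlA.
  have ex : x = l by move: lN; rewrite hx inE => /eqP.
  apply/existsP; exists i; rewrite eN hx ex eqxx andbT.
  apply/forallP => l'; apply/implyP => l'i; apply/negP => l'A.
  have : l' \in [set l0 | (l0 \in C i) && (negl l0 \notin A)].
    by rewrite inE l'i (@inB_neg _ _ _ hA l'A).
  by rewrite hx ex inE => /eqP el; move: lA; rewrite -el l'A.
Qed.

Theorem mainTheorem2 (R : realDomainType) (p c : nat)
    (C : 'I_c -> {set lit p}) (A : {set lit p}) :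
  is3SAT C -> inB A ->
  [/\ (sat C A <->
         (1%:E <= \big[Order.min/+oo%E]_(i < c) (dot (E R (C i)) (E R A))%:E)%E),
      (entails_notA C A <->
         \big[Order.min/+oo%E]_(i < c) (dot (E R (C i)) (E_notfalse R A))%:E = 0%:E)
    & E R (deduced C A) =
      \row_j Num.max
        (Num.min (\sum_(i < c) E R (C i) 0 j *
                   ((dot (E R (C i)) (E_notfalse R A) == 1 : bool) : nat)%:R) 1
         - E_assigned R A 0 j) 0].
Proof.
move=> _ hA; split.
- rewrite bigmin_ge; split.
  + move=> hs i; have [l [l1 l2]] := hs i.
    rewrite lee_fin dot_EE ler1n card_gt0; apply/set0Pn; exists l.
    by rewrite inE l1 l2.
  + move=> h i; move: (h i); rewrite lee_fin dot_EE ler1n card_gt0.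
    by case/set0Pn => l; rewrite inE => /andP [l1 l2]; exists l.
- split.
  + case=> i hi; apply/eqP; rewrite eq_le; apply/andP; split.
      have H := (proj1 (@bigmin_ge R c (fun i => (dot (E R (C i)) (E_notfalse R A))%:E) _) (lexx _)) i; apply: le_trans H _.
      rewrite lee_fin dot_ENF.
      suff -> : [set l | (l \in C i) && (negl l \notin A)] = set0 by rewrite cards0.
      apply/setP => l; rewrite !inE; apply/negP => /andP [l1 l2].
      by move: l2; have := hi l l1; rewrite /forced_false => ->.
    apply/bigmin_ge => i0; rewrite lee_fin dot_ENF; exact: ler0n.
  + move=> h.
    case: (@bigmin_ex _ _ (fun i => (dot (E R (C i)) (E_notfalse R A))%:E)) => [hoo|[i hi]].
      by move: h; rewrite hoo.
    have : (dot (E R (C i)) (E_notfalse R A))%:E = 0%:E :> \bar R by rewrite -hi.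
    case => /eqP; rewrite dot_ENF pnatr_eq0 cards_eq0 => /eqP h0.
    exists i => l l1; apply/negPn/negP => l2.
    have : l \in [set l | (l \in C i) && (negl l \notin A)] by rewrite inE l1 l2.
    by rewrite h0 inE.
- apply/rowP => j; rewrite !mxE.
  under eq_bigr => i _ do rewrite mxE dot_ENF pnatr_eq1 -natrM mulnb.
  rewrite sum_bool_card inE (@unit_propE _ _ _ _ _ hA).
  set l := litidx j.
  set S := [set _ | _].
  set b := [exists i, _].
  have hb : (0 < #|S|)%N = b.
    rewrite card_gt0; apply/set0Pn/existsP.
      by case=> i; rewrite inE => hi; exists i.
    by case=> i hi; exists i; rewrite inE.
  have hm : Num.min (#|S|%:R : R) 1 = (b : nat)%:R.
    rewrite -hb; case: #|S| => [|k] /=.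
      by apply: min_l; exact: ler01.
    by apply: min_r; rewrite ler1n.
  rewrite hm; clear hm hb; case: b; case: ((l \in A) || (negl l \in A)) => /=.
  + by rewrite subrr maxxx.
  + by rewrite subr0; apply/esym/max_l; exact: ler01.
  + by rewrite sub0r; apply/esym/max_r; rewrite lerN10.
  + by rewrite subrr maxxx.
Qed.
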